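(* Let $\alpha\in(0,1]$. For all $n$ such that $n^\alpha=2^q$ for a positive integer $q$, the sparse grid $B_n$ satisfies $|B_n|=O(n^{2-\alpha}\log n)$.
   Context: Assume $n^\alpha=2^q$ with $q$ a positive integer (so $n^\alpha$ is an integer). Let $A_n=\{(i,j)\in\mathbb{Z}^2: 0\le i,j\le 14n\}$. The sparse grid $B_n\subseteq A_n$ is the set of points of $A_n$ of at least one of the following forms: (1) $(i,j)$ with $n^\alpha \mid ij$; (2) $(i+k,j+k)$ with $n^\alpha\mid i$, $n^\alpha\mid j$ and $k\in\{1,2,\dots,n^\alpha\}$ (points on forward diagonals); (3) $(i+k,j-k)$ with $n^\alpha\mid i$, $n^\alpha\mid j$ and $k\in\{1,2,\dots,n^\alpha\}$ (points on backward diagonals). *)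

(* Defs.v *)
From HB Require Import structures.
From mathcomp Require Import all_boot all_order all_algebra.
From mathcomp Require Import all_classical all_reals all_analysis.
Set Implicit Arguments. Unset Strict Implicit. Unset Printing Implicit Defensive.
Import Order.TTheory GRing.Theory Num.Theory.
Local Open Scope ring_scope.

(* Membership in the sparse grid, with m standing for n^alpha. *)
Definition in_sparse (m : nat) (x y : int) : Prop :=
  (m%:Z %| x * y)%Z \/
  (exists (i j : int) (k : nat), (m%:Z %| i)%Z /\ (m%:Z %| j)%Z /\
      (1 <= k <= m)%N /\ x = i + k%:Z /\ y = j + k%:Z) \/
  (exists (i j : int) (k : nat), (m%:Z %| i)%Z /\ (m%:Z %| j)%Z /\
      (1 <= k <= m)%N /\ x = i + k%:Z /\ y = j - k%:Z).

Definition A_type (n : nat) := ('I_(14 * n).+1 * 'I_(14 * n).+1)%type.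

Definition sparse_grid (n m : nat) : {set A_type n} :=
  [set p : A_type n | `[< in_sparse m (nat_of_ord p.1)%:Z (nat_of_ord p.2)%:Z >] ].

(* Main.v *)
Require Import Defs.
From HB Require Import structures.
From mathcomp Require Import all_boot all_order all_algebra.
From mathcomp Require Import all_classical all_reals all_analysis.
From mathcomp Require Import zify ring lra.
Import Order.TTheory GRing.Theory Num.Theory.
Lemma cup_bound (T : finType) k (F : nat -> {set T}) M c :
  (forall i, (i < k)%N -> (#|F i| * M <= c)%N) ->
  (#|\bigcup_(i < k) F i| * M <= k * c)%N.
Proof.
elim: k => [|k IH] H; first by rewrite big_ord0 cards0.
rewrite big_ord_recr /=.
apply: leq_trans (_ : (#|\bigcup_(i < k) F i| + #|F k|) * M <= _)%N.
  by rewrite leq_mul2r (leq_card_setU _ _) orbT.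
rewrite mulnDl mulSn addnC leq_add //; first exact: H.
by apply: IH => i lik; apply: H; apply: ltnW.
Qed.

Lemma cnt N d (P : pred 'I_N.+1) : (0 < d)%N ->
  (forall y z, P y -> P z -> y %% d = z %% d) -> (#|[set y | P y]| <= N %/ d + 1)%N.
Proof.
move=> d0 HP.
pose f := fun y : 'I_N.+1 => (inord (y %/ d) : 'I_(N %/ d).+1).
rewrite -(card_in_imset (f := f)); last first.
  move=> y z; rewrite !inE => Py Pz e.
  have e2 : (y %/ d = z %/ d)%N.
    have hb : forall w : 'I_N.+1, (w %/ d < (N %/ d).+1)%N.
      by move=> w; rewrite ltnS leq_div2r // -ltnS.
    by have := congr1 val e; rewrite /f /= !inordK ?hb.
  apply: val_inj => /=.
  by rewrite (divn_eq y d) (divn_eq z d) e2 (HP _ _ Py Pz).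
by rewrite addn1; apply: leq_trans (max_card _) _; rewrite card_ord.
Qed.

Lemma aux N d : (0 < d)%N -> (d <= N)%N -> ((N %/ d + 1) * d <= 2 * N)%N.
Proof. move=> d0 dN; rewrite mulnDl mul1n; have := leq_trunc_div N d; lia. Qed.

Lemma split2 q x y : (2 ^ q %| x * y)%N ->
  exists a, (a <= q)%N /\ (2 ^ a %| x)%N /\ (2 ^ (q - a) %| y)%N.
Proof.
move=> H.
case: (posnP x) => [->|x0]; first by exists q; rewrite subnn expn0 dvd1n dvdn0.
case: (posnP y) => [->|y0]; first by exists 0%N; rewrite expn0 dvd1n dvdn0.
rewrite pfactor_dvdn // ?muln_gt0 ?x0 // lognM // in H.
exists (minn (logn 2 x) q); rewrite !pfactor_dvdn //; lia.
Qed.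
Lemma key n q : (0 < q)%N -> (2 ^ q <= n)%N ->
  (#|sparse_grid n (2 ^ q)| * 2 ^ q <= 3136 * q * n ^ 2)%N.
Proof.
move=> q0 mn.
have m0 : (0 < 2 ^ q)%N by rewrite expn_gt0.
set m := (2 ^ q)%N in m0 mn *.
pose N := (14 * n)%N.
pose F1 := fun a : nat => finset.setX [set x : 'I_N.+1 | 2 ^ a %| x]
                                    [set y : 'I_N.+1 | 2 ^ (q - a) %| y].
pose F2 := fun r : nat => finset.setX [set x : 'I_N.+1 | x %% m == r]
                                 [set y : 'I_N.+1 | y %% m == r].
pose F3 := fun r : nat => finset.setX [set x : 'I_N.+1 | x %% m == r]
                                 [set y : 'I_N.+1 | (r + y) %% m == 0].
pose U1 := \bigcup_(a < q.+1) F1 a.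
pose U2 := \bigcup_(r < m) F2 r.
pose U3 := \bigcup_(r < m) F3 r.
have sub : sparse_grid n m \subset U1 :|: U2 :|: U3.
  apply/fintype.subsetP => [[x y]]; rewrite inE => /asboolP H.
  case: H => [H1 | [[i [j [k [di [dj [_ [ex ey]]]]]]] | [i [j [k [di [dj [_ [ex ey]]]]]]]]].
  - rewrite -PoszM dvdzE /= in H1.
    have [a [aq [ha hb]]] := split2 _ _ _ H1.
    rewrite !inE; apply/orP; left; apply/orP; left; apply/bigcupP.
    have aq' : (a < q.+1)%N by [].
    by exists (Ordinal aq') => //; rewrite /F1 !inE /= ha hb.
  - have e : (x %% m = y %% m)%N.
      have : ((x : nat)%:Z == (y : nat)%:Z %[mod m])%Z.
        by rewrite eqz_mod_dvd ex ey opprD addrACA subrr addr0 rpredB.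
      by rewrite !modz_nat => /eqP [].
    rewrite !inE; apply/orP; left; apply/orP; right; apply/bigcupP.
    by exists (Ordinal (ltn_pmod x m0)) => //; rewrite /F2 !inE /= e !eqxx.
  - have e : (m %| x + y)%N.
      have : (m%:Z %| ((x : nat)%:Z + (y : nat)%:Z)%R)%Z.
        by rewrite ex ey addrACA subrr addr0 rpredD.
      by rewrite -PoszD dvdzE.
    rewrite !inE; apply/orP; right; apply/bigcupP.
    exists (Ordinal (ltn_pmod x m0)) => //; rewrite /F3 !inE /= eqxx /=.
    by rewrite modnDml.
have qn : (m <= N)%N by rewrite /N; lia.
have c1 : (#|U1| * m <= q.+1 * (4 * N ^ 2))%N.
  apply: (cup_bound _ _ F1) => a aq.
  rewrite /F1 cardsX.
  have pa : (0 < 2 ^ a)%N by rewrite expn_gt0.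
  have pb : (0 < 2 ^ (q - a))%N by rewrite expn_gt0.
  have h1 := cnt N (2 ^ a) (fun x => 2 ^ a %| x) pa
    (fun y z (Py : 2 ^ a %| y) (Pz : 2 ^ a %| z) => etrans (eqP Py) (esym (eqP Pz))).
  have h2 := cnt N (2 ^ (q - a)) (fun x => 2 ^ (q - a) %| x) pb
    (fun y z (Py : 2 ^ (q - a) %| y) (Pz : 2 ^ (q - a) %| z) => etrans (eqP Py) (esym (eqP Pz))).
  have ea : m = (2 ^ a * 2 ^ (q - a))%N by rewrite -expnD subnKC // -ltnS.
  have la : (2 ^ a <= N)%N.
    apply: leq_trans qn; rewrite /m leq_pexp2l // -ltnS //.
  have lbb : (2 ^ (q - a) <= N)%N.
    apply: leq_trans qn; rewrite /m leq_pexp2l // leq_subr //.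
  have ha := aux N _ pa la.
  have hb := aux N _ pb lbb.
  rewrite ea mulnACA.
  have -> : (4 * N ^ 2 = (2 * N) * (2 * N))%N by rewrite mulnACA.
  apply: leq_mul.
    by apply: leq_trans ha; rewrite leq_mul2r h1 orbT.
  by apply: leq_trans hb; rewrite leq_mul2r h2 orbT.
have c2 : (#|U2| * m <= m * ((N %/ m + 1) * (N %/ m + 1) * m))%N.
  apply: (cup_bound _ _ F2) => r rm.
  rewrite /F2 cardsX leq_mul2r; apply/orP; right.
  have HP : forall y z : 'I_N.+1, y %% m == r -> z %% m == r -> y %% m = z %% m.
    by move=> y z /eqP -> /eqP ->.
  by apply: leq_mul; apply: (cnt N m _ m0 HP).
have c3 : (#|U3| * m <= m * ((N %/ m + 1) * (N %/ m + 1) * m))%N.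
  apply: (cup_bound _ _ F3) => r rm.
  rewrite /F3 cardsX leq_mul2r; apply/orP; right.
  have HP : forall y z : 'I_N.+1, y %% m == r -> z %% m == r -> y %% m = z %% m.
    by move=> y z /eqP -> /eqP ->.
  have HQ : forall y z : 'I_N.+1, (r + y) %% m == 0 -> (r + z) %% m == 0 -> y %% m = z %% m.
    by move=> y z /eqP Py /eqP Pz; apply/eqP; rewrite -(eqn_modDl r) Py Pz.
  apply: leq_mul; first by apply: (cnt N m _ m0 HP).
  by apply: (cnt N m _ m0 HQ).
have hN := aux N _ m0 qn.
have cB : (#|sparse_grid n m| <= #|U1| + #|U2| + #|U3|)%N.
  apply: leq_trans (subset_leq_card sub) _.
  apply: leq_trans (leq_card_setU _ _) _.
  by rewrite leq_add2r (leq_card_setU _ _).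
have h4 : (m * ((N %/ m + 1) * (N %/ m + 1) * m) <= 4 * N ^ 2)%N.
  have -> : (m * ((N %/ m + 1) * (N %/ m + 1) * m) = ((N %/ m + 1) * m) * ((N %/ m + 1) * m))%N.
    by rewrite mulnC -!mulnA mulnCA.
  have -> : (4 * N ^ 2 = (2 * N) * (2 * N))%N by rewrite mulnACA.
  exact: leq_mul.
have e1 : (#|sparse_grid n m| * m <= (#|U1| + #|U2| + #|U3|) * m)%N := leq_mul cB (leqnn m).
have e2 : ((#|U1| + #|U2| + #|U3|) * m = #|U1| * m + #|U2| * m + #|U3| * m)%N by rewrite !mulnDl.
have e3 : (#|U1| * m + #|U2| * m + #|U3| * m <= q.+1 * (4 * N ^ 2) + 4 * N ^ 2 + 4 * N ^ 2)%N.
  apply: leq_add; first apply: leq_add => //.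
    exact: leq_trans c2 h4.
  exact: leq_trans c3 h4.
have e4 : (q.+1 * (4 * N ^ 2) + 4 * N ^ 2 + 4 * N ^ 2 <= 3136 * q * n ^ 2)%N.
  rewrite /N; nia.
rewrite e2 in e1.
exact: leq_trans e1 (leq_trans e3 e4).
Qed.
Local Open Scope ring_scope.
Theorem lemma3 (R : realType) (alpha : R) :
  0 < alpha <= 1 ->
  exists (C : R) (N : nat), forall (n q : nat),
    (N <= n)%N -> (0 < q)%N -> (n%:R : R) `^ alpha = 2 ^+ q ->
    (#|sparse_grid n (2 ^ q)|%:R : R) <= C * ((n%:R : R) `^ (2 - alpha) * ln (n%:R : R)).
Proof.
move=> /andP[a0 a1].
exists (3136%:R * alpha / ln 2), 0%N => n q _ q0 H.
have two0 : (0 : R) < 2 ^+ q by rewrite exprn_gt0.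
have n0 : (0 < n)%N.
  case: n H => // H; rewrite powR0 ?gt_eqF // in H.
  by move: two0; rewrite -H ltxx.
have nR : (1 <= n%:R :> R) by rewrite ler1n.
have mn : (2 ^ q <= n)%N.
  have : (2 : R) ^+ q <= n%:R.
    rewrite -H; apply: le_trans (ler_powR nR a1) _; rewrite powRr1 // ler0n.
  by rewrite -natrX ler_nat.
have K := key n q q0 mn.
have ln20 : (0 : R) < ln 2 by rewrite ln_gt0 // ltr1n.
have hl : alpha * ln (n%:R : R) = q%:R * ln 2.
  by rewrite -ln_powR H lnXn // mulr_natl.
have hp : (n%:R : R) `^ (2 - alpha) = n%:R ^+ 2 / 2 ^+ q.
  rewrite powRB; last by rewrite pnatr_eq0 -lt0n n0 implybT.
  by rewrite H powR_mulrn // ler0n.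
rewrite hp.
have -> : 3136%:R * alpha / ln 2 * (n%:R ^+ 2 / 2 ^+ q * ln (n%:R : R))
   = 3136%:R * q%:R * n%:R ^+ 2 / 2 ^+ q :> R.
  have -> : 3136%:R * alpha / ln 2 * (n%:R ^+ 2 / 2 ^+ q * ln (n%:R : R))
     = 3136%:R * n%:R ^+ 2 / 2 ^+ q / ln 2 * (alpha * ln (n%:R : R)) :> R by ring.
  rewrite hl; field.
  by rewrite (gt_eqF ln20) (gt_eqF two0).
rewrite ler_pdivlMr //.
have : ((#|sparse_grid n (2 ^ q)| * 2 ^ q)%:R <= (3136 * q * n ^ 2)%:R :> R).
  by rewrite ler_nat.
by rewrite !natrM !natrX.
Qed.
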